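(* Fix an integer $r\geq 1$ and let ${\mathbb{N}^r}^{*}=\mathbb{N}^r\setminus\{0\}$. Let $\alpha\in{\mathbb{N}^r}^{*}$, let $d$ be a non-negative integer with $d<|\alpha|$, let $p$ be a prime, and let $s=\mathrm{ord}_p\gcd(\alpha)$. Then there exists $\nu\in\mathcal{S}_{\alpha,d}$ such that $$\mathrm{ord}_p\frac{p^s((\nu))}{|\nu|}=0$$ if and only if $Q_p(\alpha)>Q_p(d)$.
   Context: $\mathbb{N}=\{0,1,2,\dots\}$. For $\alpha\in\mathbb{N}^r$, $|\alpha|=\alpha_1+\dots+\alpha_r$. For a finitely supported $\nu:{\mathbb{N}^r}^{*}\to\mathbb{N}$ (written $\nu\in\mathbb{N}^{({\mathbb{N}^r}^{*})}$), $|\nu|=\sum_\beta\nu_\beta$ and $((\nu))=|\nu|!/\prod_\beta(\nu_\beta!)$ is the multinomial coefficient. $\mathcal{S}_{\alpha,d}$ is the set of $\nu\in\mathbb{N}^{({\mathbb{N}^r}^{*})}$ with $\sum_\beta\nu_\beta\beta=\alpha$ and $|\nu|>d$ (i.e. factorizations of the monomial $x^\alpha$ into at least $d+1$ non-trivial monomials). For $q\in\mathbb{Q}\setminus\{0\}$, $\mathrm{ord}_p(q)$ is the exponent of $p$ in $q$. For $n\in\mathbb{N}$, $Q_p(n)(t)=a_st^s+\dots+a_0\in\mathbb{Z}[t]$ where $a_s\dots a_0$ are the base-$p$ digits of $n$ ($0\le a_i\le p-1$, $Q_p(n)(p)=n$); for $\alpha\in\mathbb{N}^r$, $Q_p(\alpha)=\sum_{i}Q_p(\alpha_i)$.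 For $P,Q\in\mathbb{Z}[t]$, $P>Q$ means $P(n)>Q(n)$ for all sufficiently large integers $n$. *)

(* Defs.v *)
From HB Require Import structures.
From mathcomp Require Import all_boot all_order all_algebra.
From mathcomp Require Import finmap.
Set Implicit Arguments. Unset Strict Implicit. Unset Printing Implicit Defensive.
Import Order.TTheory GRing.Theory Num.Theory.
Local Open Scope fset_scope.

Definition vecN (r : nat) := {ffun 'I_r -> nat}.

Definition vnorm r (a : vecN r) : nat := (\sum_(i < r) a i)%N.

Definition vgcd r (a : vecN r) : nat := \big[gcdn/0%N]_(i < r) a i.

Definition fsN (r : nat) := {fsfun vecN r -> nat with 0%N}.

Definition fsnorm r (nu : fsN r) : nat := (\sum_(b <- finsupp nu) nu b)%N.

Definition multinom r (nu : fsN r) : rat :=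
  ((fsnorm nu)`!)%:R / (\prod_(b <- finsupp nu) ((nu b)`!)%:R).

(* S_{alpha,d}: nu supported on N^r \ {0}, sum_beta nu_beta beta = alpha,
   and |nu| > d. *)
Definition S_set r (a : vecN r) (d : nat) : pred (fsN r) :=
  fun nu =>
    [&& nu [ffun => 0%N] == 0%N,
        [forall i : 'I_r, (\sum_(b <- finsupp nu) nu b * b i)%N == a i]
      & (d < fsnorm nu)%N].

(* ord_p of a rational q (0 for q = 0, but only used at q <> 0) *)
Definition ordp (p : nat) (q : rat) : int :=
  (logn p `|numq q|%N)%:Z - (logn p (`|denq q|%N))%:Z.

Definition digit (p n i : nat) : nat := ((n %/ p ^ i) %% p)%N.

(* Q_p(n) = a_s t^s + ... + a_0 in Z[t]; digits of index > n vanish. *)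
Definition Qp (p n : nat) : {poly int} :=
  \sum_(i < n.+1) ((digit p n i)%:Z)%:P * 'X^i.

Definition Qpv (p : nat) r (a : vecN r) : {poly int} := \sum_(i < r) Qp p (a i).

Definition poly_gt (P Q : {poly int}) : Prop :=
  (exists N : int, forall n : int, N <= n -> Q.[n] < P.[n])%R.

(* Main.v *)
Require Import Defs.
From HB Require Import structures.
From mathcomp Require Import all_boot all_order all_algebra.
From mathcomp Require Import finmap.
From mathcomp Require Import zify ring lra.
Import Order.TTheory GRing.Theory Num.Theory.
Set Implicit Arguments. Unset Strict Implicit. Unset Printing Implicit Defensive.

Section Part1.

Section Arith.
Variable p : nat.
Hypothesis hp : prime p.

Lemma p_gt0 : (0 < p)%N. Proof. exact: prime_gt0. Qed.
Lemma p_gt1 : (1 < p)%N. Proof. exact: prime_gt1. Qed.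
Lemma expp_gt0 k : (0 < p ^ k)%N. Proof. by rewrite expn_gt0 p_gt0. Qed.

Lemma digitZ m i : ((digit p m i)%:Z = (m %/ p ^ i)%:Z - p%:Z * (m %/ p ^ i.+1)%:Z)%R.
Proof.
rewrite /digit expnSr divnMA.
have := divn_eq (m %/ p ^ i) p; set a := m %/ p ^ i => ha.
have -> : (a %% p = a - p * (a %/ p))%N by lia.
rewrite subzn; last by lia.
by [].
Qed.

Local Open Scope ring_scope.

Lemma digit_sum (T : int) m K :
  \sum_(i < K.+1) (digit p m i)%:Z * T ^+ i =
  m%:Z + (T - p%:Z) * \sum_(k < K) (m %/ p ^ k.+1)%:Z * T ^+ k
   - p%:Z * (m %/ p ^ K.+1)%:Z * T ^+ K.
Proof.
elim: K => [|K IH].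
  by rewrite big_ord1 big_ord0 digitZ expn0 divn1 expr0; ring.
rewrite big_ord_recr /= IH big_ord_recr /= digitZ exprS; ring.
Qed.

Definition Phi (T : int) (K m : nat) : int :=
  m%:Z + (T - p%:Z) * \sum_(k < K) (m %/ p ^ k.+1)%:Z * T ^+ k.

Lemma small_div m k : (m <= k)%N -> (m %/ p ^ k.+1 = 0)%N.
Proof.
move=> hmk; apply: divn_small.
have := ltn_expl k.+1 p_gt1; lia.
Qed.

Lemma Phi_ext T K K' m : (m <= K)%N -> (K <= K')%N -> Phi T K m = Phi T K' m.
Proof.
move=> hmK /subnK <-; rewrite /Phi; congr (_ + _ * _).
elim: (K' - K)%N => [|j IH]; first by rewrite add0n.
rewrite addSn big_ord_recr /= -IH small_div ?mul0r ?addr0 //; lia.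
Qed.

Lemma Qp_horner T m : (Qp p m).[T] = \sum_(i < m.+1) (digit p m i)%:Z * T ^+ i.
Proof.
rewrite /Qp horner_sum; apply: eq_bigr => i _.
by rewrite hornerCM hornerXn.
Qed.

Lemma Qp_Phi T K m : (m <= K)%N -> (Qp p m).[T] = Phi T K m.
Proof.
move=> hK; rewrite -(Phi_ext T (leqnn m) hK) Qp_horner digit_sum small_div //.
by rewrite mulr0 mul0r subr0.
Qed.

End Arith.

End Part1.

Section Part2.

Section Arith2.
Variable p : nat.
Hypothesis hp : prime p.
Local Open Scope ring_scope.
Variable T : int.
Hypothesis hT : p%:Z <= T.

Lemma T_ge0 : 0 <= T.
Proof. exact: le_trans hT. Qed.

Lemma wsum_le K (f g : nat -> nat) : (forall k, (f k <= g k)%N) ->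
  \sum_(k < K) (f k)%:Z * T ^+ k <= \sum_(k < K) (g k)%:Z * T ^+ k.
Proof.
move=> hfg; apply: ler_sum => k _; apply: ler_wpM2r; first exact: exprn_ge0 T_ge0.
by rewrite lez_nat.
Qed.

Lemma Phi_mono K a b : (a <= b)%N -> Phi p T K a <= Phi p T K b.
Proof.
move=> hab; rewrite /Phi; apply: lerD; first by rewrite lez_nat.
have hTp : 0 <= T - p%:Z by rewrite subr_ge0.
rewrite ler_wpM2l //.
by apply: (@wsum_le K (fun k => a %/ p ^ k.+1)%N (fun k => b %/ p ^ k.+1)%N) => k; apply: leq_div2r.
Qed.

Lemma Phi0 K : Phi p T K 0 = 0.
Proof. by rewrite /Phi big1 ?mulr0 ?addr0 // => k _; rewrite div0n mul0r. Qed.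

Lemma Phi_add K a b : Phi p T K a + Phi p T K b <= Phi p T K (a + b).
Proof.
rewrite /Phi addrACA -mulrDr -big_split /= PoszD lerD2l.
apply: ler_wpM2l; first by rewrite subr_ge0.
apply: ler_sum => k _; rewrite -mulrDl; apply: ler_wpM2r; first exact: exprn_ge0 T_ge0.
rewrite -PoszD lez_nat divnD ?expp_gt0 //; lia.
Qed.

Lemma Phi_sum K (I : Type) (s : seq I) (F : I -> nat) :
  \sum_(x <- s) Phi p T K (F x) <= Phi p T K (\sum_(x <- s) F x)%N.
Proof.
elim: s => [|x s IH]; first by rewrite !big_nil Phi0.
rewrite !big_cons; apply: le_trans (Phi_add _ _ _).
by rewrite lerD2l.
Qed.

Lemma Phi_lt1 K a b : (a < b)%N -> Phi p T K a < Phi p T K b.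
Proof.
move=> hab; have := Phi_add K a 1; have := Phi_mono K hab.
have -> : Phi p T K 1 = 1.
  rewrite /Phi big1 ?mulr0 ?addr0 // => k _.
  rewrite divn_small ?mul0r //; have := ltn_expl k.+1 (p_gt1 hp); lia.
rewrite addn1; move=> h1 h2; apply: lt_le_trans h1; apply: lt_le_trans h2.
by rewrite ltrDl.
Qed.

End Arith2.

End Part2.

Section Part3.

Lemma sum_ext0 K K' (F : nat -> nat) : (K <= K')%N ->
  (forall k, (K <= k)%N -> F k = 0%N) ->
  (\sum_(k < K) F k = \sum_(k < K') F k)%N.
Proof.
move=> /subnK <- h0; elim: (K' - K)%N => [|j IH]; first by rewrite add0n.
by rewrite addSn big_ord_recr /= -IH h0 ?addn0 //; lia.
Qed.

Lemma div_sum_le (I : Type) (s : seq I) (F : I -> nat) q : (0 < q)%N ->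
  (\sum_(x <- s) F x %/ q <= (\sum_(x <- s) F x) %/ q)%N.
Proof.
move=> hq; elim: s => [|x s IH]; first by rewrite !big_nil.
rewrite !big_cons divnD //; lia.
Qed.

Lemma div_sum_eq (I : Type) (s : seq I) (F : I -> nat) q : (0 < q)%N ->
  ((\sum_(x <- s) F x) %/ q =
    \sum_(x <- s) F x %/ q + (\sum_(x <- s) F x %% q) %/ q)%N.
Proof.
move=> hq.
have -> : (\sum_(x <- s) F x = (\sum_(x <- s) F x %/ q) * q + \sum_(x <- s) F x %% q)%N.
  rewrite big_distrl /= -big_split /=; apply: eq_bigr => x _; exact: divn_eq.
by rewrite divnMDl.
Qed.

Lemma sum_pointwise_eq K (a b : 'I_K -> nat) : (forall k, a k <= b k)%N ->
  (\sum_k a k = \sum_k b k)%N -> forall k, a k = b k.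
Proof.
move=> hab heq k.
have : (\sum_k (b k - a k) == 0)%N by rewrite sumnB // heq subnn.
rewrite sum_nat_eq0 => /forallP /(_ k); have := hab k; lia.
Qed.

Lemma sum_range K u e : (e <= K)%N -> (\sum_(k < K) (u <= k < e) = e - u)%N.
Proof.
move=> heK.
suff : (\sum_(k < K) (u <= k < e) = minn K e - u)%N by move=> ->; lia.
elim: K {heK} => [|K IH]; first by rewrite big_ord0 min0n.
rewrite big_ord_recr /= IH; lia.
Qed.

Lemma pred_div n q : (0 < n)%N -> (0 < q)%N -> (q %| n)%N -> ((n - 1) %/ q = n %/ q - 1)%N.
Proof.
move=> hn hq /dvdnP [a han]; subst n; rewrite mulnK //.
have ha : (0 < a)%N by move: hn; rewrite muln_gt0 => /andP[].
have -> : (a * q - 1 = (a - 1) * q + (q - 1))%N.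
  rewrite mulnBl mul1n; have : (q <= a * q)%N by rewrite leq_pmull. lia.
rewrite divnMDl // divn_small; lia.
Qed.

Section Arith3.
Variable p : nat.
Hypothesis hp : prime p.



Lemma L_sum m K : (m <= K)%N ->
  logn p m`! = (\sum_(k < K) m %/ p ^ k.+1)%N.
Proof.
move=> hK; rewrite logn_fact // -(@sum_ext0 m K (fun k => m %/ p ^ k.+1)%N) //; last first.
  by move=> k hk; apply: small_div.
rewrite big_add1 /= big_mkord.
done.
Qed.

Lemma logn_le_self n : (logn p n <= n)%N.
Proof.
case: n => [|n]; first by rewrite logn0.
have h1 := pfactor_dvdnn p n.+1.
have := dvdn_leq (ltn0Sn n) h1.
have := ltn_expl (logn p n.+1) (p_gt1 hp); lia.
Qed.











End Arith3.

End Part3.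

Section Part4.

Lemma PoszSum (I : Type) (s : seq I) (F : I -> nat) :
  ((\sum_(x <- s) F x)%N%:Z = \sum_(x <- s) (F x)%:Z)%R.
Proof. by rewrite -natz natr_sum; apply: eq_bigr => x _; rewrite natz. Qed.

Section Key.
Variable p : nat.
Hypothesis hp : prime p.

Lemma mem_le_sum (cs : seq nat) c0 (F : nat -> nat) : c0 \in cs ->
  (F c0 <= \sum_(c <- cs) F c)%N.
Proof.
move=> hc0; rewrite (perm_big _ (perm_to_rem hc0)) big_cons; exact: leq_addr.
Qed.

Lemma pointwise_LB (cs : seq nat) u c0 k :
  (forall c, c \in cs -> p ^ u %| c)%N -> c0 \in cs -> ~~ (p ^ u.+1 %| c0)%N ->
  (0 < \sum_(c <- cs) c)%N ->
  (\sum_(c <- cs) c %/ p ^ k.+1 + (u <= k < logn p (\sum_(c <- cs) c))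
     <= (\sum_(c <- cs) c) %/ p ^ k.+1)%N.
Proof.
move=> hdiv hc0 hnd hn; set n := (\sum_(c <- cs) c)%N.
have hq := expp_gt0 hp k.+1; set q := (p ^ k.+1)%N in hq *.
rewrite /n div_sum_eq //= -/n leq_add2l.
case: (boolP (u <= k < logn p n)%N) => [/andP[huk hke]|_] //=.
have hqn : (q %| n)%N by rewrite /q pfactor_dvdn.
have hqc0 : ~~ (q %| c0)%N.
  apply: contra hnd => h; apply: dvdn_trans h; by rewrite dvdn_exp2l.
set R := (\sum_(c <- cs) c %% q)%N.
have hRpos : (0 < R)%N.
  apply: leq_trans (mem_le_sum (fun c => c %% q)%N hc0).
  by rewrite lt0n -/(dvdn q c0).
have hqR : (q %| R)%N.
  have : n = ((\sum_(c <- cs) c %/ q) * q + R)%N.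
    rewrite /n /R big_distrl /= -big_split /=; apply: eq_bigr => x _; exact: divn_eq.
  move=> hn'; move: hqn; rewrite hn' dvdn_addr //; exact: dvdn_mull.
by rewrite divn_gt0 // dvdn_leq.
Qed.

Lemma cs_le (cs : seq nat) c : c \in cs -> (c <= \sum_(x <- cs) x)%N.
Proof. by move=> h; apply: (mem_le_sum id h). Qed.

Lemma sumL (cs : seq nat) K : (\sum_(c <- cs) c <= K)%N ->
  (\sum_(c <- cs) logn p c`! = \sum_(c <- cs) \sum_(k < K) c %/ p ^ k.+1)%N.
Proof.
move=> hK; rewrite big_seq [RHS]big_seq; apply: eq_bigr => c hc.
exact: (L_sum hp (leq_trans (cs_le hc) hK)).
Qed.

Lemma LB_sum (cs : seq nat) u c0 K :
  (forall c, c \in cs -> p ^ u %| c)%N -> c0 \in cs -> ~~ (p ^ u.+1 %| c0)%N ->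
  (0 < \sum_(c <- cs) c)%N -> (\sum_(c <- cs) c <= K)%N ->
  (\sum_(c <- cs) logn p c`! + (logn p (\sum_(c <- cs) c) - u)
     <= logn p (\sum_(c <- cs) c)`!)%N.
Proof.
move=> hdiv hc0 hnd hn hK; set n := (\sum_(c <- cs) c)%N.
rewrite (L_sum hp hK) -(sum_range u (leq_trans (logn_le_self hp n) hK)).
rewrite (sumL hK) exchange_big /= -big_split /=; apply: leq_sum => k _.
exact: (pointwise_LB k hdiv hc0 hnd hn).
Qed.

Lemma EQ_pointwise (cs : seq nat) u c0 K :
  (forall c, c \in cs -> p ^ u %| c)%N -> c0 \in cs -> ~~ (p ^ u.+1 %| c0)%N ->
  (0 < \sum_(c <- cs) c)%N -> (\sum_(c <- cs) c <= K)%N ->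
  (logn p (\sum_(c <- cs) c)`! <= \sum_(c <- cs) logn p c`! + (logn p (\sum_(c <- cs) c) - u))%N ->
  forall k : 'I_K, ((\sum_(c <- cs) c - 1) %/ p ^ k.+1 <= \sum_(c <- cs) c %/ p ^ k.+1)%N.
Proof.
move=> hdiv hc0 hnd hn hK hle; set n := (\sum_(c <- cs) c)%N.
have hLB := LB_sum hdiv hc0 hnd hn hK.
have heq : (\sum_(c <- cs) logn p c`! + (logn p n - u) = logn p n`!)%N.
  by apply/eqP; rewrite eqn_leq hLB hle.
move: heq; rewrite (L_sum hp hK) -(sum_range u (leq_trans (logn_le_self hp n) hK)).
rewrite (sumL hK) exchange_big /= -big_split /= => heq k.
have := sum_pointwise_eq (fun k : 'I_K => pointwise_LB k hdiv hc0 hnd hn) heq k.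
rewrite -/n.
case: (boolP (u <= k < logn p n)%N) => [/andP[huk hke]|_] /= => hk.
  rewrite pred_div ?expp_gt0 //; first by rewrite -hk; lia.
  by rewrite pfactor_dvdn.
rewrite addn0 in hk; rewrite hk; apply: leq_div2r; lia.
Qed.

Local Open Scope ring_scope.

Lemma Phi_sum_gt (cs : seq nat) K (T : int) :
  p%:Z <= T ->
  (0 < \sum_(c <- cs) c)%N ->
  (forall k : 'I_K, ((\sum_(c <- cs) c - 1) %/ p ^ k.+1 <= \sum_(c <- cs) c %/ p ^ k.+1)%N) ->
  Phi p T K (\sum_(c <- cs) c - 1)%N + 1 <= \sum_(c <- cs) Phi p T K c.
Proof.
move=> hT hn hpt; rewrite /Phi big_split /= -PoszSum.
rewrite -big_distrr /= exchange_big /=.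
have -> : (\sum_(c <- cs) c)%N%:Z = (\sum_(c <- cs) c - 1)%N%:Z + 1.
  by rewrite -[1]/(Posz 1) -PoszD subnK.
rewrite addrAC lerD2l.
apply: ler_wpM2l; first by rewrite subr_ge0.
apply: ler_sum => k _; rewrite -mulr_suml; apply: ler_wpM2r.
  exact: exprn_ge0 (T_ge0 hT).
by rewrite -PoszSum lez_nat.
Qed.

End Key.

End Part4.

Section Part5.

Definition dsum (b K : nat) (f : nat -> nat) := (\sum_(0 <= t < K) f t * b ^ t)%N.

Lemma dsumS b K f : dsum b K.+1 f = (dsum b K f + f K * b ^ K)%N.
Proof. by rewrite /dsum big_nat_recr. Qed.

Lemma dsum0 b f : dsum b 0 f = 0%N.
Proof. by rewrite /dsum big_geq. Qed.

Lemma dsum_le b K f g : (forall t, t < K -> f t <= g t)%N -> (dsum b K f <= dsum b K g)%N.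
Proof.
elim: K => [|K IH] h; first by rewrite !dsum0.
rewrite !dsumS leq_add ?leq_mul2r ?h ?orbT //; apply: IH => t ht; apply: h; lia.
Qed.

Lemma dsum_eq b K f g : (forall t, t < K -> f t = g t)%N -> dsum b K f = dsum b K g.
Proof. by move=> h; apply/eqP; rewrite eqn_leq !dsum_le // => t /h ->. Qed.

Lemma dsum_add b K f g : dsum b K (fun t => f t + g t)%N = (dsum b K f + dsum b K g)%N.
Proof. elim: K => [|K IH]; first by rewrite !dsum0. rewrite !dsumS IH; ring. Qed.

Lemma dsum_zero b K f : (forall t, t < K -> f t = 0)%N -> dsum b K f = 0%N.
Proof. by move=> h; rewrite (@dsum_eq b K f (fun _ => 0%N)) //; elim: K {h} => [|K IH]; rewrite ?dsum0 // dsumS IH. Qed.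

Lemma dsum_ind b K j : (j < K)%N -> dsum b K (fun t => (t == j) : nat) = (b ^ j)%N.
Proof.
elim: K => [//|K IH] hj; rewrite dsumS.
case: (ltngtP j K) => hjK.
- rewrite IH //; case: (@eqP nat K j) => [?|_]; [lia| by rewrite mul0n addn0].
- lia.
- rewrite hjK mul1n dsum_zero ?add0n // => t ht; case: (@eqP nat t K) => //; lia.
Qed.

Lemma dsum_ext b m K f : (m <= K)%N -> (forall t, m <= t < K -> f t = 0)%N ->
  dsum b K f = dsum b m f.
Proof.
move=> /subnK <- h; elim: (K - m)%N h => [|j IH] h; first by rewrite add0n.
rewrite addSn dsumS h ?mul0n ?addn0; last lia.
by apply: IH => t ht; apply: h; lia.
Qed.

Lemma dsum_geom b s m : (0 < b)%N -> (s <= m)%N ->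
  (dsum b m (fun t => (s <= t) * (b - 1)) + b ^ s = b ^ m)%N.
Proof.
move=> hb; elim: m => [|m IH] hs.
  have -> : s = 0%N by lia. by rewrite dsum0.
case: (ltngtP s m.+1) => h; [ | lia | ].
- rewrite dsumS -addnAC IH; last lia.
  have -> : (s <= m) = true by lia.
  rewrite mul1n expnS; have : (0 < b ^ m)%N by rewrite expn_gt0 hb.
  move: (b ^ m) => P hP.
  by rewrite -[X in (X + _)%N]mul1n -mulnDl; congr (_ * _)%N; lia.
- rewrite -h dsum_zero ?add0n // => t ht; have -> : (s <= t) = false by lia. by [].
Qed.

Lemma dsum_lt b m f : (0 < b)%N -> (forall t, t < m -> f t <= b - 1)%N -> (dsum b m f < b ^ m)%N.
Proof.
move=> hb h; have := @dsum_geom b 0 m hb (leq0n m).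
have H : forall t, (t < m -> f t <= (0 <= t) * (b - 1))%N by move=> t ht; rewrite mul1n; exact: h.
have := @dsum_le b m f (fun t => (0 <= t) * (b - 1))%N H.
rewrite expn0; lia.
Qed.

Lemma dsum_mod b K m f : (0 < b)%N -> (forall t, t < K -> f t <= b - 1)%N -> (m <= K)%N ->
  (dsum b K f %% b ^ m = dsum b m f)%N.
Proof.
move=> hb h hmK.
have hsplit : (dsum b K f = dsum b m f + \sum_(m <= t < K) f t * b ^ t)%N.
  by rewrite /dsum (@big_cat_nat _ _ _ m 0 K _ _ (leq0n m) hmK).
have hdv : (b ^ m %| \sum_(m <= t < K) f t * b ^ t)%N.
  rewrite big_nat; apply: dvdn_sum => t /andP[ht _]; apply: dvdn_mull; exact: dvdn_exp2l.
case/dvdnP: hdv => k hk; rewrite hsplit hk addnC modnMDl modn_small //.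
apply: dsum_lt => // t ht; apply: h; lia.
Qed.

Section Digits.
Variable p : nat.
Hypothesis hp : prime p.

Lemma digit_le x t : (digit p x t <= p - 1)%N.
Proof. have := ltn_pmod (x %/ p ^ t) (p_gt0 hp); rewrite /digit; lia. Qed.

Lemma mod_digits x m : (x %% p ^ m = dsum p m (digit p x))%N.
Proof.
elim: m => [|m IH]; first by rewrite expn0 modn1 dsum0.
rewrite dsumS -IH.
have hP : (0 < p ^ m)%N := expp_gt0 hp m.
have hp0 := p_gt0 hp.
move: (digit_le x m); rewrite /digit.
set P := (p ^ m)%N in hP *; set y := (x %/ P)%N.
have hx : x = (y %/ p * (p * P) + (y %% p * P + x %% P))%N.
  rewrite {1}(divn_eq x P) -/y {1}(divn_eq y p); ring.
move=> hyp; rewrite expnS -/P [in LHS]hx modnMDl modn_small addnC //.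
have := ltn_pmod x hP; nia.
Qed.

Lemma digits_full x K : (x < p ^ K)%N -> x = dsum p K (digit p x).
Proof. by move=> h; rewrite -mod_digits modn_small. Qed.

Lemma digit_small x t : (x < p ^ t)%N -> digit p x t = 0%N.
Proof. by move=> h; rewrite /digit divn_small ?mod0n. Qed.

Lemma digit_low x s t : (p ^ s %| x)%N -> (t < s)%N -> digit p x t = 0%N.
Proof.
move=> hs hts; rewrite /digit; apply/eqP; rewrite -/(dvdn p _).
rewrite dvdn_divRL; last by apply: dvdn_trans hs; apply: dvdn_exp2l; lia.
rewrite -expnS; apply: dvdn_trans hs; exact: dvdn_exp2l.
Qed.

End Digits.

Lemma lex_extract B K (x y : nat -> nat) : (0 < B)%N ->
  (forall t, t < K -> x t < B)%N -> (forall t, t < K -> y t < B)%N ->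
  (dsum B K y < dsum B K x)%N ->
  exists j, [/\ (j < K)%N, (y j < x j)%N & forall t, (j < t < K)%N -> x t = y t].
Proof.
move=> hB; elim: K => [|K IH] hx hy; first by rewrite !dsum0.
rewrite !dsumS => hlt.
case: (ltngtP (y K) (x K)) => hK.
- exists K; split => //; lia.
- exfalso.
  have h1 : (dsum B K x < B ^ K)%N by apply: dsum_lt => // t ht; have := hx t; lia.
  have : ((x K).+1 * B ^ K <= y K * B ^ K)%N by rewrite leq_mul2r; apply/orP; right.
  rewrite mulSn; lia.
- have [j [hj1 hj2 hj3]] : exists j, [/\ (j < K)%N, (y j < x j)%N & forall t, (j < t < K)%N -> x t = y t].
    apply: IH; [move=> t ht; apply: hx; lia| move=> t ht; apply: hy; lia| lia].
  exists j; split => //; first lia.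
  move=> t ht; case: (ltngtP t K) => htK; [apply: hj3; lia|lia|by rewrite htK].
Qed.

End Part5.

Section Part6.

Lemma logn_prod p (I : Type) (X : seq I) (F : I -> nat) : (forall x, 0 < F x)%N ->
  logn p (\prod_(x <- X) F x) = (\sum_(x <- X) logn p (F x))%N.
Proof.
move=> hF; elim: X => [|x X IH]; first by rewrite !big_nil logn1.
by rewrite !big_cons lognM ?IH // prodn_gt0.
Qed.

Local Open Scope ring_scope.

Lemma ordp_frac p a b : (0 < a)%N -> (0 < b)%N ->
  ordp p (a%:R / b%:R) = (logn p a)%:Z - (logn p b)%:Z.
Proof.
move=> ha hb; set x : rat := a%:R / b%:R.
have hx : x != 0 by rewrite mulf_neq0 ?invr_eq0 ?pnatr_eq0 -?lt0n.
have hb0 : (b%:R : rat) != 0 by rewrite pnatr_eq0 -lt0n.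
have e := numqE x.
have hint : numq x * b%:Z = a%:Z * denq x.
  apply: (@intr_inj rat); rewrite !intrM e /x !pmulrn; field; exact: hb0.
have habs : (`|numq x| * b = a * `|denq x|)%N.
  by have := congr1 absz hint; rewrite !abszM.
have hn : (0 < `|numq x|)%N by rewrite absz_gt0 numq_eq0.
have hd : (0 < `|denq x|)%N by rewrite absz_gt0 denq_eq0.
have := congr1 (logn p) habs; rewrite !lognM // => hl.
rewrite /ordp; lia.
Qed.

Lemma multinom_frac r (nu : fsN r) s p :
  (0 < fsnorm nu)%N ->
  ((p ^ s)%N%:R * multinom nu) / (fsnorm nu)%:R =
  ((p ^ s * (fsnorm nu)`!)%N%:R / ((\prod_(b <- finsupp nu) (nu b)`!) * fsnorm nu)%N%:R :> rat).
Proof.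
move=> hN; rewrite /multinom -natr_prod !natrM.
have h1 : ((\prod_(b <- finsupp nu) (nu b)`!)%:R : rat) != 0.
  by rewrite pnatr_eq0 -lt0n prodn_gt0 // => b; exact: fact_gt0.
have h2 : ((fsnorm nu)%:R : rat) != 0 by rewrite pnatr_eq0 -lt0n.
by field; rewrite h1 h2.
Qed.

Lemma ordp_eq0 p (hp : prime p) r (nu : fsN r) s :
  (0 < fsnorm nu)%N ->
  (ordp p (((p ^ s)%N%:R * multinom nu) / (fsnorm nu)%:R) = 0) <->
  (s + logn p (fsnorm nu)`! = \sum_(b <- finsupp nu) logn p (nu b)`! + logn p (fsnorm nu))%N.
Proof.
move=> hN.
have hP : (0 < \prod_(b <- finsupp nu) (nu b)`!)%N by rewrite prodn_gt0 // => b; exact: fact_gt0.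
have hpp : (0 < p ^ s)%N by rewrite expn_gt0 prime_gt0.
rewrite multinom_frac // ordp_frac; [|by rewrite muln_gt0 hpp fact_gt0|by rewrite muln_gt0 hP hN].
rewrite !lognM ?fact_gt0 //.
rewrite pfactorK // logn_prod; last by move=> b; exact: fact_gt0.
split => [/eqP|h]; last by rewrite h subrr.
by rewrite subr_eq0 => /eqP [].
Qed.

End Part6.

Section Part7.

Section Nu.
Variable p : nat.
Hypothesis hp : prime p.
Variable r : nat.
Variable alpha : vecN r.
Hypothesis halpha : alpha != [ffun => 0%N].

Lemma vgcd_gt0 : (0 < vgcd alpha)%N.
Proof.
rewrite lt0n; apply/negP => /eqP h0; move/negP: halpha; apply; apply/eqP/ffunP => i.
rewrite ffunE; have := @biggcdn_inf _ i xpredT alpha (alpha i) isT (dvdnn _).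
by rewrite -/(vgcd alpha) h0 dvd0n => /eqP.
Qed.

Lemma vnorm_ge i : (alpha i <= vnorm alpha)%N.
Proof. by rewrite /vnorm (bigD1 i) //= leq_addr. Qed.

Variable nu : fsN r.
Hypothesis h0 : nu [ffun => 0%N] = 0%N.
Hypothesis hsum : forall i, (\sum_(b <- finsupp nu) nu b * b i)%N = alpha i.

Lemma supp_pos b : b \in finsupp nu -> (0 < nu b)%N.
Proof. by rewrite mem_finsupp lt0n. Qed.

Lemma supp_nz b : b \in finsupp nu -> exists i, (0 < b i)%N.
Proof.
move=> hb; case: (boolP [exists i, (0 < b i)%N]) => [/existsP //|].
rewrite negb_exists => /forallP h; exfalso.
have hb0 : b = [ffun => 0%N] by apply/ffunP => i; rewrite ffunE; have := h i; lia.
by move: hb; rewrite mem_finsupp hb0 h0 eqxx.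
Qed.

Definition csn := [seq nu b | b <- finsupp nu].

Lemma csn_sum : (\sum_(c <- csn) c)%N = fsnorm nu.
Proof. by rewrite /csn big_map. Qed.

Lemma csn_L : (\sum_(c <- csn) logn p c`!)%N = (\sum_(b <- finsupp nu) logn p (nu b)`!)%N.
Proof. by rewrite /csn big_map. Qed.

Lemma nu_udata : exists u c0, [/\ (u <= logn p (vgcd alpha))%N,
   (forall c, c \in csn -> p ^ u %| c)%N, c0 \in csn & ~~ (p ^ u.+1 %| c0)%N].
Proof.
have hex : exists u, has (fun b => logn p (nu b) == u) (finsupp nu).
  case: (finsupp nu =P fset0) => [he|hne].
    move/negP: halpha; case; apply/eqP/ffunP => i; rewrite ffunE -hsum he.
    by rewrite big_seq_fset0.
  have [b hb] := fset0Pn _ (introN eqP hne).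
  by exists (logn p (nu b)); apply/hasP; exists b.
case: (ex_minnP hex) => u /hasP [b0 hb0 /eqP hu] hmin.
have hdiv : forall b, b \in finsupp nu -> (p ^ u %| nu b)%N.
  move=> b hb; rewrite pfactor_dvdn ?supp_pos //; apply: hmin.
  by apply/hasP; exists b.
exists u, (nu b0); split.
- rewrite -pfactor_dvdn // ?vgcd_gt0 //; apply/dvdn_biggcdP => i _.
  rewrite -hsum big_seq; apply: dvdn_sum => b hb; apply: dvdn_mulr; exact: hdiv.
- by move=> c /mapP [b hb ->]; apply: hdiv.
- by apply/mapP; exists b0.
- by rewrite pfactor_dvdn ?supp_pos // hu ltnn.
Qed.

Lemma nu_LB : (0 < fsnorm nu)%N ->
  (\sum_(b <- finsupp nu) logn p (nu b)`! + (logn p (fsnorm nu) - logn p (vgcd alpha))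
    <= logn p (fsnorm nu)`!)%N.
Proof.
move=> hN; have [u [c0 [hus hdiv hc0 hnd]]] := nu_udata.
have := LB_sum hp hdiv hc0 hnd (ltac:(by rewrite csn_sum)) (leqnn _).
rewrite csn_sum csn_L; lia.
Qed.

Local Open Scope ring_scope.

Lemma sum_Phi_nu (T : int) K : p%:Z <= T -> (vnorm alpha <= K)%N ->
  \sum_(b <- finsupp nu) Phi p T K (nu b) <= \sum_(i < r) Phi p T K (alpha i).
Proof.
move=> hT hK.
apply: le_trans (_ : \sum_(i < r) \sum_(b <- finsupp nu) Phi p T K (nu b * b i) <= _).
  rewrite exchange_big /= big_seq [X in _ <= X]big_seq; apply: ler_sum => b hb.
  have [i0 hi0] := supp_nz hb.
  rewrite (bigD1 i0) //=; apply: le_trans (_ : Phi p T K (nu b * b i0) <= _).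
    by apply: Phi_mono => //; rewrite leq_pmulr.
  rewrite lerDl sumr_ge0 // => i _; rewrite -(Phi0 p T K); exact: Phi_mono.
apply: ler_sum => i _; rewrite -hsum; exact: Phi_sum.
Qed.

End Nu.

Local Open Scope ring_scope.

Lemma forward r (alpha : vecN r) (halpha : alpha != [ffun => 0%N]) d p (hp : prime p)
  (nu : fsN r) :
  S_set alpha d nu ->
  ordp p (((p ^ (logn p (vgcd alpha)))%N%:R * multinom nu) / (fsnorm nu)%:R) = 0 ->
  poly_gt (Qpv p alpha) (Qp p d).
Proof.
move=> /and3P [/eqP h0 /forallP hs hd] hord.
have hsum : forall i, (\sum_(b <- finsupp nu) nu b * b i)%N = alpha i.
  by move=> i; apply/eqP; apply: hs.
set s := logn p (vgcd alpha) in hord.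
set N := fsnorm nu in hd hord.
have hN : (0 < N)%N by lia.
have heq := (ordp_eq0 hp s hN).1 hord.
have [u [c0 [hus hdiv hc0 hnd]]] := nu_udata hp halpha hsum.
set K := (vnorm alpha + N)%N.
have hNK : (\sum_(c <- csn nu) c <= K)%N by rewrite csn_sum; lia.
have hLB := LB_sum hp hdiv hc0 hnd (ltac:(by rewrite csn_sum)) hNK.
have hle : (logn p (\sum_(c <- csn nu) c)`! <= \sum_(c <- csn nu) logn p c`! + (logn p (\sum_(c <- csn nu) c) - u))%N.
  move: hLB heq hus; rewrite !csn_sum !csn_L -/N -/s; lia.
have hpt := EQ_pointwise hp hdiv hc0 hnd (ltac:(by rewrite csn_sum)) hNK hle.
exists p%:Z => T hT.
rewrite (Qp_Phi hp T (_ : (d <= K)%N)); last lia.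
rewrite /Qpv horner_sum.
rewrite (eq_bigr (fun i => Phi p T K (alpha i))); last first.
  move=> i _; apply: Qp_Phi => //; have := vnorm_ge alpha i; lia.
have h1 := @Phi_sum_gt p (csn nu) K T hT (ltac:(by rewrite csn_sum)) hpt.
rewrite csn_sum -/N /csn big_map in h1.
have h2 := sum_Phi_nu hp halpha h0 hsum hT (ltac:(lia) : (vnorm alpha <= K)%N).
have h3 : Phi p T K d <= Phi p T K (N - 1)%N by apply: Phi_mono => //; lia.
apply: le_lt_trans h3 _; apply: lt_le_trans h2.
by apply: lt_le_trans h1; rewrite ltrDl.
Qed.

End Part7.

Section Part8.
Local Open Scope fset_scope.

Section Merge.
Variable r : nat.
Variable Lst : seq (vecN r * nat).

Definition keys : {fset vecN r} := [fset x.1 | x in Lst].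

Definition mk : fsN r := [fsfun b in keys => (\sum_(x <- Lst | x.1 == b) x.2)%N].

Lemma keysP x : x \in Lst -> x.1 \in keys.
Proof. by move=> hx; apply/imfsetP; exists x. Qed.

Lemma mkE b : mk b = (\sum_(x <- Lst | x.1 == b) x.2)%N.
Proof.
rewrite /mk fsfunE; case: ifP => // hb.
rewrite big_seq_cond big1 // => x /andP [hx /eqP hxb].
by move: hb; rewrite -hxb keysP.
Qed.

Lemma supp_keys G : (forall b, G b 0%N = 0%N) ->
  (\sum_(b <- finsupp mk) G b (mk b) = \sum_(b <- keys) G b (mk b))%N.
Proof.
move=> hG; apply: big_fset_incl.
  apply/fsubsetP => b; rewrite mem_finsupp => hb.
  by apply: contraR hb => hnk; rewrite /mk fsfunE (negPf hnk).
by move=> b _; rewrite mem_finsupp negbK => /eqP ->.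
Qed.

Lemma keys_sum (H : vecN r * nat -> nat) :
  (\sum_(b <- keys) \sum_(x <- Lst | x.1 == b) H x = \sum_(x <- Lst) H x)%N.
Proof.
rewrite (eq_bigr (fun b => \sum_(x <- Lst) (if x.1 == b then H x else 0))%N); last first.
  by move=> b _; rewrite big_mkcond.
rewrite exchange_big /=; apply: eq_big_seq => x hx.
rewrite (bigD1_seq x.1) ?keysP ?fset_uniq //=.
have -> : (x.1 == x.1) = true by apply/eqP.
rewrite big1 ?addn0 // => b hb; case: ifP => // /eqP hxb.
by move: hb; rewrite -hxb => /eqP.
Qed.

End Merge.

End Part8.

Section Part9.

Section UB.
Variable p : nat.
Hypothesis hp : prime p.

Lemma L_add a b : (logn p a`! + logn p b`! <= logn p (a + b)`!)%N.
Proof.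
have ha : (a <= a + b)%N by lia. have hb : (b <= a + b)%N by lia.
rewrite (L_sum hp ha) (L_sum hp hb) (L_sum hp (leqnn _)) -big_split /=.
by apply: leq_sum => k _; rewrite divnD ?expp_gt0 //; lia.
Qed.

Lemma L_super (I : Type) (s : seq I) (P : pred I) (F : I -> nat) :
  (\sum_(x <- s | P x) logn p (F x)`! <= logn p (\sum_(x <- s | P x) F x)`!)%N.
Proof.
elim: s => [|x s IH]; first by rewrite !big_nil.
rewrite !big_cons; case: (P x) => //.
by apply: leq_trans (L_add _ _); rewrite leq_add2l.
Qed.

Lemma UB_sum (cs : seq nat) s K :
  (\sum_(c <- cs) c <= K)%N -> (0 < \sum_(c <- cs) c)%N ->
  (forall c, c \in cs -> p ^ s %| c)%N ->
  (forall k, k < K -> s <= k -> \sum_(c <- cs) c %% p ^ k.+1 <= p ^ k.+1)%N ->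
  (logn p (\sum_(c <- cs) c)`! <= \sum_(c <- cs) logn p c`! + (logn p (\sum_(c <- cs) c) - s))%N.
Proof.
move=> hK hn hdiv hR; set n := (\sum_(c <- cs) c)%N.
rewrite (L_sum hp hK) -(sum_range s (leq_trans (logn_le_self hp n) hK)).
rewrite (sumL hp hK) exchange_big /= -big_split /=; apply: leq_sum => k _.
have hq := expp_gt0 hp k.+1; set q := (p ^ k.+1)%N in hq *.
rewrite /n div_sum_eq //= -/n leq_add2l.
set R := (\sum_(c <- cs) c %% q)%N.
case: (ltnP k s) => hks.
  have -> : R = 0%N.
    rewrite /R big_seq big1 // => c hc; apply/eqP; rewrite -/(dvdn q c).
    by apply: dvdn_trans (hdiv c hc); rewrite dvdn_exp2l.
  by rewrite div0n.
have hRq : (R <= q)%N by apply: hR.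
case: (ltngtP R q) => hRq'; [by rewrite divn_small| lia |].
rewrite hRq' divnn hq /=.
have hqn : (q %| n)%N.
  have : n = ((\sum_(c <- cs) c %/ q) * q + R)%N.
    rewrite /n /R big_distrl /= -big_split /=; apply: eq_bigr => x _; exact: divn_eq.
  move=> ->; rewrite hRq' dvdn_add // ?dvdn_mull //.
move: hqn; rewrite /q pfactor_dvdn // => he; lia.
Qed.

End UB.

End Part9.

Section Part10.

Lemma dsum_sumr r b K (f : 'I_r -> nat -> nat) :
  (\sum_i dsum b K (f i) = dsum b K (fun t => \sum_i f i t))%N.
Proof.
rewrite /dsum exchange_big /=; apply: eq_bigr => t _; by rewrite big_distrl.
Qed.

Lemma sum_ge_term r (F : 'I_r -> nat) i : (F i <= \sum_j F j)%N.
Proof. by rewrite (bigD1 i) //= leq_addr. Qed.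

Section Construct.
Variable r : nat.
Variable alpha : vecN r.
Hypothesis halpha : alpha != [ffun => 0%N].
Variables d p : nat.
Hypothesis hp : prime p.
Variable K : nat.
Variable w : 'I_r -> nat -> nat.
Let s := logn p (vgcd alpha).
Hypothesis hsK : (s <= K)%N.
Hypothesis W1 : forall i t, (t < s)%N -> w i t = 0%N.
Hypothesis W2 : forall t, (\sum_i w i t <= p - 1)%N.
Hypothesis W3 : forall i, (dsum p K (w i) <= alpha i)%N.
Hypothesis W4 : exists i, (dsum p K (w i) + p ^ s <= alpha i)%N.
Hypothesis W5 : (d < p ^ s + \sum_i dsum p K (w i))%N.

Let Wv i := dsum p K (w i).
Let e_ (i : 'I_r) : vecN r := [ffun i' => (i' == i) : nat].
Let beta0 : vecN r := [ffun i => (alpha i - Wv i) %/ p ^ s]%N.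
Let Lst : seq (vecN r * nat) := (beta0, (p ^ s)%N) :: [seq (e_ i, Wv i) | i <- index_enum 'I_r].
Let nu := mk Lst.

Lemma hps i : (p ^ s %| alpha i)%N.
Proof.
apply: dvdn_trans (pfactor_dvdnn p (vgcd alpha)) _.
exact: (@biggcdn_inf _ i xpredT alpha (alpha i) isT (dvdnn _)).
Qed.

Lemma F0 i t : (w i t <= p - 1)%N.
Proof. exact: leq_trans (sum_ge_term (fun i => w i t) i) (W2 t). Qed.

Lemma F1 i : (p ^ s %| Wv i)%N.
Proof.
rewrite /Wv /dsum big_nat; apply: dvdn_sum => t _.
case: (ltnP t s) => ht; first by rewrite W1.
by apply: dvdn_mull; rewrite dvdn_exp2l.
Qed.

Lemma F2 i : (p ^ s * beta0 i + Wv i = alpha i)%N.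
Proof.
rewrite /beta0 ffunE mulnC divnK; first by have := W3 i; rewrite -/(Wv i); lia.
by apply: dvdn_sub; [exact: hps | exact: F1].
Qed.

Lemma F3 : beta0 != [ffun => 0%N].
Proof.
case: W4 => i hi; apply/negP => /eqP h.
have := F2 i; rewrite h ffunE muln0 add0n; rewrite -/(Wv i) in hi.
have := expp_gt0 hp s; lia.
Qed.

Lemma Lst_sum (H : vecN r * nat -> nat) :
  (\sum_(x <- Lst) H x = H (beta0, p ^ s) + \sum_i H (e_ i, Wv i))%N.
Proof. by rewrite big_cons big_map. Qed.

Lemma e_i i i' : e_ i' i = (i == i' : nat).
Proof. by rewrite ffunE. Qed.

Lemma sum_e (F : 'I_r -> nat) i : (\sum_i' F i' * (i == i' : nat) = F i)%N.
Proof.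
rewrite (bigD1 i) //= eqxx muln1 big1 ?addn0 // => i' hi'.
by rewrite eq_sym (negPf hi') muln0.
Qed.

Lemma nu_zero : nu [ffun => 0%N] = 0%N.
Proof.
rewrite /nu mkE big_mkcond Lst_sum /=.
have -> : (beta0 == [ffun => 0%N]) = false by apply/negbTE; exact: F3.
rewrite add0n big1 // => i _.
have -> : (e_ i == [ffun => 0%N]) = false.
  by apply/negbTE; apply/negP => /eqP h; have := e_i i i; rewrite h ffunE eqxx.
by [].
Qed.

Lemma nu_sum i : (\sum_(b <- finsupp nu) nu b * b i)%N = alpha i.
Proof.
rewrite (@supp_keys _ _ (fun b v => v * b i)%N) //.
rewrite (eq_bigr (fun b => \sum_(x <- Lst | x.1 == b) x.2 * x.1 i))%N; last first.
  move=> b _; rewrite /nu mkE big_distrl /=; apply: eq_bigr => x /eqP -> //.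
rewrite keys_sum Lst_sum /=.
rewrite (eq_bigr (fun i' => Wv i' * (i == i' : nat)))%N; last by move=> i' _; rewrite e_i.
by rewrite (sum_e Wv i) F2.
Qed.

Lemma nu_norm : fsnorm nu = (p ^ s + \sum_i Wv i)%N.
Proof.
rewrite /fsnorm (@supp_keys _ _ (fun b v => v)) //.
rewrite (eq_bigr (fun b => \sum_(x <- Lst | x.1 == b) x.2))%N; last by move=> b _; rewrite /nu mkE.
by rewrite keys_sum Lst_sum.
Qed.

Lemma nu_Lsum : (\sum_(x <- Lst) logn p x.2`! <= \sum_(b <- finsupp nu) logn p (nu b)`!)%N.
Proof.
rewrite (@supp_keys _ _ (fun b v => logn p v`!)); last by move=> b; rewrite fact0 logn1.
rewrite -keys_sum; apply: leq_sum => b _; rewrite /nu mkE; exact: L_super.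
Qed.

Lemma Wmod i k : (s <= k.+1)%N ->
  (Wv i %% p ^ k.+1 <= dsum p (minn k.+1 K) (w i))%N.
Proof.
move=> hs; rewrite /minn; case: ltnP => hk.
  by rewrite dsum_mod ?p_gt0 // ?(ltnW hk) // => t _; exact: F0.
exact: leq_mod.
Qed.

Lemma sumWmod k : (s <= k)%N -> (\sum_i Wv i %% p ^ k.+1 + p ^ s <= p ^ k.+1)%N.
Proof.
move=> hs; set m := minn k.+1 K.
have hsm : (s <= m)%N by lia.
apply: (@leq_trans (\sum_i dsum p m (w i) + p ^ s)%N).
  rewrite leq_add2r; apply: leq_sum => i _; apply: Wmod; lia.
apply: (@leq_trans (p ^ m)%N); last by rewrite leq_exp2l ?p_gt1 //; lia.
rewrite dsum_sumr -(dsum_geom (p_gt0 hp) hsm) leq_add2r; apply: dsum_le => t ht.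
case: (ltnP t s) => hts.
  by rewrite big1 // => i _; apply: W1.
by rewrite mul1n.
Qed.

Lemma construct_ok : exists nu : fsN r, S_set alpha d nu /\
     ordp p (((p ^ s)%N%:R * multinom nu) / (fsnorm nu)%:R) = 0%R.
Proof.
exists nu.
have hN : (0 < fsnorm nu)%N by rewrite nu_norm; have := expp_gt0 hp s; lia.
split.
  apply/and3P; split; first by rewrite nu_zero.
    by apply/forallP => i; rewrite nu_sum.
  by rewrite nu_norm.
apply/(ordp_eq0 hp s hN).
have hLB := nu_LB hp halpha nu_zero nu_sum hN.
set cs := [seq x.2 | x <- Lst].
have hcs : (\sum_(c <- cs) c = fsnorm nu)%N by rewrite /cs big_map nu_norm Lst_sum.
have hUB : (logn p (\sum_(c <- cs) c)`! <= \sum_(c <- cs) logn p c`! +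
              (logn p (\sum_(c <- cs) c) - s))%N.
  apply: (UB_sum hp (K := fsnorm nu)); first by rewrite hcs.
  - by rewrite hcs.
  - move=> c /mapP [x hx ->]; move: hx; rewrite inE => /orP [/eqP -> //|].
    by move=> /mapP [i _ ->]; exact: F1.
  - move=> k _ hsk; rewrite /cs big_map Lst_sum /= modn_small; last first.
      by rewrite ltn_exp2l ?p_gt1.
    by rewrite addnC; apply: sumWmod.
rewrite hcs /cs big_map in hUB.
have hL := nu_Lsum.
have hse : (s <= logn p (fsnorm nu))%N.
  rewrite -pfactor_dvdn // nu_norm; apply: dvdn_add => //.
  by rewrite big_seq; apply: dvdn_sum => i _; exact: F1.
rewrite -/s; lia.
Qed.

End Construct.

End Part10.

Section Part11.

Lemma lex_lt b K j (x y : nat -> nat) : (0 < b)%N ->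
  (forall t, t < K -> y t <= b - 1)%N -> (j < K)%N -> (y j < x j)%N ->
  (forall t, j < t < K -> y t <= x t)%N -> (dsum b K y < dsum b K x)%N.
Proof.
move=> hb; elim: K => [//|K IH] hy hjK hyx hhi.
rewrite !dsumS.
case: (ltngtP j K) => hj; last first.
- subst j; have h1 : (dsum b K y < b ^ K)%N by apply: dsum_lt => // t ht; apply: hy; lia.
  have : ((y K).+1 * b ^ K <= x K * b ^ K)%N by rewrite leq_mul2r hyx orbT.
  rewrite mulSn; lia.
- lia.
- have h1 : (dsum b K y < dsum b K x)%N.
    apply: IH => //; [move=> t ht; apply: hy; lia| move=> t ht; apply: hhi; lia].
  have : (y K * b ^ K <= x K * b ^ K)%N by rewrite leq_mul2r hhi ?orbT //; lia.
  lia.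
Qed.

Lemma sum_ind r (F : 'I_r -> nat) i0 : (\sum_i F i * (i == i0 : nat) = F i0)%N.
Proof.
rewrite (bigD1 i0) //= eqxx muln1 big1 ?addn0 // => i hi.
by rewrite (negPf hi) muln0.
Qed.

Lemma sub_vec r (A : 'I_r -> nat) m : (m < \sum_i A i)%N ->
  exists B : 'I_r -> nat, [/\ forall i, (B i <= A i)%N, (\sum_i B i = m)%N &
    exists i0, (B i0 < A i0)%N].
Proof.
elim: m => [|m IH] hm.
  exists (fun _ => 0%N); split => //; first by rewrite big1.
  case: (pickP (fun i => 0 < A i)%N) => [i0 hi0|hn]; first by exists i0.
  by move: hm; rewrite big1 // => i _; have := hn i; rewrite /= lt0n => /negbFE /eqP.
have [B [hB1 hB2 [i0 hi0]]] := IH (ltnW hm).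
set B' := fun i => (B i + (i == i0 : nat))%N.
have hB'1 : forall i, (B' i <= A i)%N.
  move=> i; rewrite /B'; case: (@eqP _ i i0) => [->|_]; [lia| rewrite addn0; exact: hB1].
have hB'2 : (\sum_i B' i = m.+1)%N.
  rewrite /B' big_split /= hB2 (eq_bigr (fun i => 1 * (i == i0 : nat))%N) ?sum_ind ?addn1 //.
  by move=> i _; rewrite mul1n.
exists B'; split => //.
case: (pickP (fun i => B' i < A i)%N) => [i1 hi1|hn]; first by exists i1.
exfalso; have : (\sum_i A i <= \sum_i B' i)%N.
  by apply: leq_sum => i _; have := hn i; rewrite /= ltnNge => /negbFE.
lia.
Qed.

Local Open Scope ring_scope.

Lemma Qp_dsum p (hp : prime p) m K T0 : (m < K)%N ->
  (Qp p m).[T0%:Z] = (dsum T0 K (digit p m))%:Z.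
Proof.
move=> hmK; rewrite Qp_horner (@dsum_ext _ m.+1) //; last first.
  move=> t /andP [ht _]; apply: digit_small => //.
  have := ltn_expl t (p_gt1 hp); lia.
rewrite /dsum big_mkord PoszSum; apply: eq_bigr => i _.
by rewrite PoszM; congr (_ * _); rewrite -[RHS]natz natrX natz.
Qed.

Local Close Scope ring_scope.

End Part11.

Section Part12.

Lemma dsum_scale b K v f : dsum b K (fun t => v * f t)%N = (v * dsum b K f)%N.
Proof. elim: K => [|K IH]; first by rewrite !dsum0 muln0. rewrite !dsumS IH; ring. Qed.

Lemma backward r (hr : (0 < r)%N) (alpha : vecN r) (halpha : alpha != [ffun => 0%N])
  d (hd : (d < vnorm alpha)%N) p (hp : prime p) :
  poly_gt (Qpv p alpha) (Qp p d) ->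
  exists nu : fsN r, S_set alpha d nu /\
     ordp p (((p ^ (logn p (vgcd alpha)))%N%:R * multinom nu) / (fsnorm nu)%:R) = 0%R.
Proof.
move=> [N hN].
set s := logn p (vgcd alpha).
set K := (vnorm alpha + d).+1.
have hp1 := p_gt1 hp.
have hKp : forall x, (x < K)%N -> (x < p ^ K)%N.
  move=> x hx; have := ltn_expl K hp1; lia.
have haK : forall i, (alpha i < K)%N by move=> i; have := vnorm_ge alpha i; lia.
set a := fun i t => digit p (alpha i) t.
set c := fun t => (\sum_i a i t)%N.
set dd := digit p d.
have ha_dig : forall i, alpha i = dsum p K (a i).
  by move=> i; apply: (digits_full hp); apply: hKp.
have hd_dig : d = dsum p K dd by apply: (digits_full hp); apply: hKp; lia.
set T0 := (`|N| + r * p).+1%N.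
have hT0p : (p <= T0)%N by rewrite /T0; nia.
have hNT : (N <= Posz T0)%R.
  have h1 : (N <= Posz (`|N|%N))%R by rewrite abszE ler_norm.
  apply: le_trans h1 _; rewrite lez_nat /T0; lia.
have key := hN (Posz T0) hNT.
rewrite (@Qp_dsum p hp d K T0) in key; last lia.
rewrite /Qpv horner_sum (eq_bigr (fun i => Posz (dsum T0 K (a i)))) in key; last first.
  by move=> i _; apply: Qp_dsum.
rewrite -PoszSum dsum_sumr ltz_nat in key.
have hc_le : forall t, (c t <= r * (p - 1))%N.
  move=> t; rewrite /c; apply: (@leq_trans (\sum_(i < r) (p - 1))).
    by apply: leq_sum => i _; exact: digit_le.
  by rewrite sum_nat_const card_ord.
have [j [hjK hdj hhi]] : exists j, [/\ (j < K)%N, (dd j < c j)%N & forall t, (j < t < K)%N -> c t = dd t].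
  apply: lex_extract key; first lia.
    move=> t _; rewrite -/(c t); have := hc_le t; have : (r * (p - 1) <= r * p)%N by rewrite leq_mul2l leq_subr orbT. rewrite /T0; lia.
  by move=> t _; have := digit_le hp d t; rewrite /dd; lia.
have hps' : forall i, (p ^ s %| alpha i)%N by move=> i; exact: hps.
have ha0 : forall i t, (t < s)%N -> a i t = 0%N by move=> i t ht; apply: (digit_low hp (hps' i)).
have hjs : (s <= j)%N.
  case: (ltnP j s) => // hjs; exfalso; move: hdj; rewrite /c big1 //.
  by move=> i _; apply: ha0.
have hct : forall t, (j < t)%N -> (c t <= p - 1)%N.
  move=> t ht; case: (ltnP t K) => htK.
    by rewrite hhi ?ht ?htK //; exact: digit_le.
  rewrite /c big1 // => i _; apply: digit_small.
  have := ltn_expl t hp1; have := haK i; lia.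
have [i1 hi1] : exists i1, (0 < a i1 s)%N.
  case: (pickP (fun i => ~~ (p ^ s.+1 %| alpha i))%N) => [i1 hi1|hall].
    exists i1; rewrite lt0n; apply: contra hi1 => /eqP h0.
    have : (p %| alpha i1 %/ p ^ s)%N by apply/eqP.
    by rewrite dvdn_divRL ?hps' // expnS.
  exfalso.
  have : (p ^ s.+1 %| vgcd alpha)%N.
    by apply/dvdn_biggcdP => i _; have := hall i; move/negbFE.
  by rewrite pfactor_dvdn ?vgcd_gt0 // ltnn.
have hsK : (s <= K)%N by lia.
have hsK' : (s < K)%N by lia.
case: (leqP (c j) (p - 1)) => hcj.
-
  have [i0 hi0] : exists i0, (0 < a i0 j)%N.
    case: (pickP (fun i => 0 < a i j)%N) => [i0 h|hn]; first by exists i0.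
    exfalso; move: hdj; rewrite /c big1 // => i _.
    by have := hn i; rewrite /= lt0n => /negbFE /eqP.
  set ind := fun i t => (((j == s) && (t == j)) : nat) * (i == i0 : nat).
  set w := fun i t => ((j <= t) * a i t - ind i t)%N.
  have hsumind : forall t, (\sum_i ind i t = ((j == s) && (t == j)))%N.
    by move=> t; rewrite /ind sum_ind.
  apply: (@construct_ok r alpha halpha d p hp K w hsK).
  + move=> i t ht; rewrite /w; have -> : (j <= t) = false by lia. by [].
  + move=> t; apply: (@leq_trans (\sum_i (j <= t) * a i t)%N).
      by apply: leq_sum => i _; rewrite /w leq_subr.
    rewrite -big_distrr /= -/(c t).
    case: (leqP j t) => h; last by rewrite mul0n. rewrite mul1n. case: (ltngtP j t) h => h2 h3; [exact: hct|lia|by rewrite -h2].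
  + move=> i; rewrite (ha_dig i); apply: dsum_le => t _; rewrite /w.
    have := leq_subr (ind i t) ((j <= t) * a i t); case: (j <= t); lia.
  + exists (if j == s then i0 else i1).
    rewrite -(dsum_ind p hsK') -dsum_add.
    case: (eqVneq j s) => hjs'.
    * rewrite (ha_dig i0); apply: dsum_le => t _; rewrite /w /ind hjs' eqxx /=.
      case: (eqVneq t s) => hts.
        by rewrite hts leqnn eqxx mul1n /= muln1; move: hi0; rewrite hjs'; lia.
      rewrite /= ?mul0n ?subn0 ?addn0; case: (s <= t); lia.
    * rewrite (ha_dig i1); apply: dsum_le => t _; rewrite /w /ind (negPf hjs') /= mul0n subn0.
      case: (eqVneq t s) => hts.
        have hjs2 : (j <= s) = false by lia.
        by rewrite hts hjs2 mul0n add0n /=; exact: hi1.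
      rewrite /= ?addn0; case: (j <= t); lia.
  + have hlow : forall t, (j <= t)%N -> (c t <= (t == s) + \sum_i w i t)%N.
      move=> t ht; apply: (@leq_trans (\sum_i (w i t + ind i t))%N).
        rewrite /c; apply: leq_sum => i _; rewrite /w ht mul1n; lia.
      rewrite big_split /= hsumind [X in (_ <= X)%N]addnC leq_add2l.
      case: (eqVneq j s) => [hj'|hj']; case: (eqVneq t j) => [ht'|ht'] //=.
      by rewrite ht' hj' eqxx.
    rewrite hd_dig dsum_sumr -(dsum_ind p hsK') -dsum_add.
    apply: (lex_lt (j := j)).
    * exact: p_gt0.
    * by move=> t _; exact: digit_le.
    * exact: hjK.
    * apply: leq_trans hdj _; exact: hlow.
    * move=> t /andP [ht1 ht2]; rewrite -hhi ?ht1 ?ht2 //; apply: hlow; lia.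
-
  have [B [hB1 hB2 [i0 hi0]]] : exists B : 'I_r -> nat, [/\ forall i, (B i <= a i j)%N,
      (\sum_i B i = p - 1)%N & exists i0, (B i0 < a i0 j)%N].
    apply: sub_vec; rewrite -/(c j); lia.
  set chain := fun t => ((s <= t) && (t < j) : nat) * (p - 1).
  set hi := fun i t => ((j < t) * a i t + (t == j) * B i)%N.
  set w := fun i t => (hi i t + chain t * (i == i0 : nat))%N.
  have hchain : (dsum p K chain + p ^ s = p ^ j)%N.
    rewrite (@dsum_ext p j K chain); [|lia|].
      rewrite (@dsum_eq p j chain (fun t => (s <= t) * (p - 1))%N).
        exact: dsum_geom (p_gt0 hp) hjs.
      by move=> t ht; rewrite /chain ht andbT.
    by move=> t /andP [ht _]; rewrite /chain (_ : (t < j) = false) ?andbF //; lia.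
  have hsumw : forall t, (\sum_i w i t = (j < t) * c t + (t == j) * (p - 1) + chain t)%N.
    have h1 : (\sum_(i < r) (i == i0 : nat) = 1)%N.
      by rewrite -(sum_ind (fun _ => 1%N) i0); apply: eq_bigr => i _; rewrite mul1n.
    move=> t; rewrite /w /hi !big_split /= -!big_distrr /= hB2 h1 muln1.
    by rewrite -/(c t).
  have hW4 : (dsum p K (w i0) + p ^ s <= alpha i0)%N.
    rewrite (@dsum_eq p K (w i0) (fun t => hi i0 t + chain t)%N); last first.
      by move=> t _; rewrite /w eqxx muln1.
    rewrite dsum_add -addnA hchain -(dsum_ind p hjK) -dsum_add (ha_dig i0).
    apply: dsum_le => t _; rewrite /hi.
    case: (ltngtP j t) => h /=; rewrite ?mul1n ?mul0n ?addn0 ?add0n //.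
    by subst t; rewrite addn1.
  apply: (@construct_ok r alpha halpha d p hp K w hsK).
  + move=> i t ht; rewrite /w /hi /chain.
    have -> : (j < t) = false by lia.
    have -> : (t == j) = false by apply/negbTE; lia.
    have -> : (s <= t) = false by lia.
    by [].
  + move=> t; rewrite hsumw /chain.
    case: (ltngtP j t) => h /=; rewrite ?mul1n ?mul0n ?addn0 ?add0n ?andbF ?andbT //.
    * have := hct t h; lia.
    * case: (s <= t); lia.
    * lia.
  + move=> i; case: (eqVneq i i0) => [->|hii0]; first by lia.
    rewrite (ha_dig i); apply: dsum_le => t _; rewrite /w (negPf hii0) muln0 addn0 /hi.
    case: (ltngtP j t) => h /=; rewrite ?mul1n ?mul0n ?addn0 ?add0n //.
    by subst t.
  + by exists i0.
  + rewrite dsum_sumr (@dsum_eq p K _ (fun t => (j < t) * c t + (t == j) * (p - 1) + chain t)%N); last first.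
      by move=> t _; exact: hsumw.
    rewrite !dsum_add.
    rewrite (@dsum_eq p K (fun t => (t == j) * (p - 1))%N (fun t => (p - 1) * (t == j))%N); last first.
      by move=> t _; rewrite mulnC.
    rewrite dsum_scale (dsum_ind p hjK).
    have hsplit : d = (dsum p K (fun t => (t <= j) * dd t) + dsum p K (fun t => (j < t) * dd t))%N.
      rewrite -dsum_add hd_dig; apply: dsum_eq => t _; case: (leqP t j); lia.
    have hlowd : (dsum p K (fun t => (t <= j) * dd t) < p ^ j.+1)%N.
      rewrite (@dsum_ext p j.+1 K); [|lia|].
        apply: dsum_lt; first exact: p_gt0.
        by move=> t _; have := digit_le hp d t; rewrite /dd; case: (t <= j); lia.
      by move=> t /andP [ht _]; rewrite (_ : (t <= j) = false) //; lia.
    have hhid : dsum p K (fun t => (j < t) * dd t) = dsum p K (fun t => (j < t) * c t).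
      apply: dsum_eq => t htK; case: (ltnP j t) => h; last by rewrite !mul0n.
      by rewrite hhi ?h ?htK.
    have hpj : (p ^ j.+1 = (p - 1) * p ^ j + p ^ j)%N.
      rewrite expnS; have := p_gt0 hp; move: (p ^ j)%N => P; nia.
    rewrite -/s; move: hchain hsplit hlowd hhid hpj; lia.
Qed.

End Part12.

Unset Implicit Arguments.

Theorem lemma2p10 (r : nat) (hr : (0 < r)%N) (alpha : vecN r)
    (halpha : alpha != [ffun => 0%N]) (d : nat) (hd : (d < vnorm alpha)%N)
    (p : nat) (hp : prime p) :
  let s := logn p (vgcd alpha) in
  (exists nu : fsN r, S_set alpha d nu /\
     ordp p (((p ^ s)%N%:R * multinom nu) / (fsnorm nu)%:R) = 0%R)
  <-> poly_gt (Qpv p alpha) (Qp p d).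
Proof.
move=> s; split.
- by case=> nu [hS hord]; exact: (forward halpha hp hS hord).
- move=> h; have := backward hr halpha hd hp h; rewrite /s; exact: id.
Qed.
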